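(* Let $q$ be a prime power and let $\xi$ be a generator of the multiplicative group $\mathbb{F}_q^*$. Let $n$ and $m$ be positive integers such that $\gcd(n,q)=1$ and $\gcd(n,q-1)=m$. Then for every positive integer $r$, the families of $\xi^{mr}$-constacyclic and cyclic codes of length $n$ over $\mathbb{F}_q$ are monomially equivalent.
   Context: For $c\in\mathbb{F}_q^*$, a linear code $C\subseteq\mathbb{F}_q^n$ is called $c$-constacyclic if for every codeword $(c_0,c_1,\ldots,c_{n-1})\in C$ we also have $(c\, c_{n-1},c_0,\ldots,c_{n-2})\in C$; cyclic codes are the $1$-constacyclic codes. An isometry of linear codes is an $\mathbb{F}_q$-linear isomorphism preserving Hamming distance (equivalently, a map given by a monomial matrix). For $a,b\in\mathbb{F}_q^*$, the families of $a$-constacyclic and $b$-constacyclic codes of length $n$ over $\mathbb{F}_q$ are called monomially equivalent if there is a one-to-one correspondence between the set of $a$-constacyclic codes and the set of $b$-constacyclic codes of length $n$ given by an isometry of linear codes. *)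

(* Defs.v *)
From HB Require Import structures.
From mathcomp Require Import all_boot all_order all_algebra all_fingroup all_field.
Set Implicit Arguments. Unset Strict Implicit. Unset Printing Implicit Defensive.
Import GRing.Theory.
Local Open Scope ring_scope.

Section Codes.
Variables (F : finFieldType) (n : nat).

Definition linear_code (C : {set 'rV[F]_n}) : Prop :=
  0 \in C /\ forall (a : F) (u v : 'rV[F]_n), u \in C -> v \in C -> a *: u + v \in C.

(* c-constacyclic shift: (c_0,...,c_{n-1}) |-> (c * c_{n-1}, c_0, ..., c_{n-2}).
   ord_pred i is i-1 for i>0 and n-1 for i=0. *)
Definition constashift (c : F) (v : 'rV[F]_n) : 'rV[F]_n :=
  \row_(i < n) ((if nat_of_ord i == 0%N then c else 1) * v 0 (ord_pred i)).

Definition constacyclic (c : F) (C : {set 'rV[F]_n}) : Prop :=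
  linear_code C /\ forall v, v \in C -> constashift c v \in C.

Definition hamming (u v : 'rV[F]_n) : nat := #|[set i : 'I_n | u 0 i != v 0 i]|.

Definition isometry (f : 'rV[F]_n -> 'rV[F]_n) : Prop :=
  [/\ forall (a : F) (u v : 'rV[F]_n), f (a *: u + v) = a *: f u + f v,
      bijective f &
      forall u v, hamming (f u) (f v) = hamming u v].

Definition monomially_equivalent (a b : F) : Prop :=
  exists f : 'rV[F]_n -> 'rV[F]_n,
    isometry f /\
    forall C : {set 'rV[F]_n}, linear_code C ->
      (constacyclic a C <-> constacyclic b (f @: C)).

End Codes.

(* Main.v *)
Require Import Defs.
From mathcomp Require Import all_boot all_order all_algebra all_fingroup all_field.
From mathcomp Require Import ring.
Import GRing.Theory.
Local Open Scope ring_scope.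

Section Main.
Variables (F : finFieldType) (n : nat) (lam : F).
Hypothesis n_gt0 : (0 < n)%N.
Hypothesis lam0 : lam != 0.

Definition fD (v : 'rV[F]_n) : 'rV[F]_n := \row_(i < n) (lam ^+ i * v 0 i).
Definition gD (v : 'rV[F]_n) : 'rV[F]_n := \row_(i < n) (lam^-1 ^+ i * v 0 i).

Lemma fD_lin a u v : fD (a *: u + v) = a *: fD u + fD v.
Proof. by apply/matrixP=> i j; rewrite !mxE; ring. Qed.

Lemma fD0 : fD 0 = 0.
Proof. by apply/matrixP=> i j; rewrite !mxE mulr0. Qed.

Lemma fD_inj : injective fD.
Proof.
move=> u v /matrixP H; apply/matrixP=> i j; have := H i j.
rewrite !mxE !ord1 => /mulfI; apply; exact: expf_neq0.
Qed.

Lemma fD_bij : bijective fD.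
Proof.
exists gD => v; apply/matrixP=> i j; rewrite !mxE ord1 mulrA -exprMn.
  by rewrite mulVf // expr1n mul1r.
by rewrite mulfV // expr1n mul1r.
Qed.

Lemma fD_ham u v : hamming (fD u) (fD v) = hamming u v.
Proof.
rewrite /hamming; apply: eq_card => i; rewrite !inE !mxE.
apply/idP/idP; apply: contra; first by move/eqP->.
by move/eqP/mulfI => -> //; exact: expf_neq0.
Qed.

Lemma ordpredE (j : 'I_n) : (ord_pred j : nat) = if (j == 0 :> nat) then n.-1 else j.-1.
Proof.
case: j => j Hj /=.
case: j Hj => [|j] Hj /=.
  by rewrite add0n modn_small // prednK.
by rewrite -modnDmr modnn addn0 modn_small // ltnW.
Qed.

Lemma fD_shift v :
  constashift 1 (fD v) = lam^-1 *: fD (constashift (lam ^+ n) v).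
Proof.
apply/matrixP=> i j; rewrite !mxE if_same mul1r ordpredE.
case: eqP => [->|i0].
  rewrite expr0 mul1r mulrA; congr (_ * _).
  by rewrite -{2}(prednK n_gt0) exprS mulrA mulVf // mul1r.
rewrite mul1r mulrA; congr (_ * _).
case: j i0 => [[|j] Hj] i0 //=.
by rewrite exprS mulrA mulVf // mul1r.
Qed.

Lemma mono_eq : monomially_equivalent n (lam ^+ n) 1.
Proof.
exists fD; split; first by split; [exact: fD_lin | exact: fD_bij | exact: fD_ham].
move=> C [C0 Clin]; split.
- move=> [_ Csh]; split.
    split; first by apply/imsetP; exists 0 => //; rewrite fD0.
    move=> a _ _ /imsetP[u uC ->] /imsetP[v vC ->]; rewrite -fD_lin.
    by apply/imsetP; exists (a *: u + v) => //; exact: Clin.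
  move=> _ /imsetP[v vC ->]; rewrite fD_shift.
  apply/imsetP; exists (lam^-1 *: constashift (lam ^+ n) v + 0).
    by apply: Clin => //; exact: Csh.
  by rewrite fD_lin fD0 addr0.
- move=> [_ Csh]; split; first by split.
  move=> v vC.
  have : fD (constashift (lam ^+ n) v) \in fD @: C.
    have -> : fD (constashift (lam ^+ n) v) = lam *: constashift 1 (fD v).
      by rewrite fD_shift scalerA mulfV // scale1r.
    have H : fD v \in fD @: C by apply: imset_f.
    have := Csh _ H => H2.
    move/imsetP: H2 => [w wC Hw]; apply/imsetP.
    exists (lam *: w + 0); first exact: Clin.
    by rewrite fD_lin fD0 addr0 Hw.
  by case/imsetP=> w wC /fD_inj ->.
Qed.

End Main.

Theorem corollary3p6 (F : finFieldType) (q : nat) (xi : F) (n m : nat) :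
  #|F| = q ->
  (q.-1).-primitive_root xi ->
  (0 < n)%N -> (0 < m)%N ->
  coprime n q -> gcdn n q.-1 = m ->
  forall r : nat, (0 < r)%N ->
    monomially_equivalent n (xi ^+ (m * r)) 1.
Proof.
move=> Fq prim n0 m0 _ gm r r0.
have q1 : (0 < q.-1)%N by exact: prim_order_gt0 prim.
have [a _ Ha] := Bezoutl n q1.
have xi0 : xi != 0.
  apply/eqP=> x0; have := prim_expr_order prim; rewrite x0 expr0n.
  by rewrite eqn0Ngt q1 /= => /esym/eqP; rewrite oner_eq0.
have E : xi ^+ (m * r) = ((xi ^+ (a * r))^-1) ^+ n.
  have H1 : xi ^+ (m * r) * xi ^+ (a * r * n) = 1.
    rewrite -exprD -(prim_expr_mod prim).
    rewrite -mulnA (mulnC r n) mulnA -mulnDl -gm gcdnC.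
    by rewrite (eqP (dvdn_mulr r Ha)) expr0.
  apply: (mulIf (expf_neq0 (a * r * n) xi0)); rewrite H1.
  by rewrite (exprM _ (a * r) n) -exprMn mulVf ?expr1n; last exact: expf_neq0.
have L0 : (xi ^+ (a * r))^-1 != 0 by rewrite invr_eq0 expf_neq0.
rewrite E; exact: (@mono_eq F n _ n0 L0).
Qed.
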